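(* Let $d\ge1$, $r\ge1$, $n\ge d+2$, and let $K$ be a set of $d$-simplices of $K_n^d$ such that every $d$-hypercut $H$ satisfies $|\mathrm{Supp}(H)\cap K|\ge r$. Then the facet graph $G_d(K)$ is $(d+r-1)$-connected.
   Context: Fix a field $\mathbb F$. A $d$-simplex is a $(d+1)$-element subset of $[n]$ oriented by increasing order; $K_n^d$ is the complex of all subsets of $[n]$ of size at most $d+1$. For a simplex $\rho$ and $\tau=\rho\setminus\{p\}$ with $p$ the $i$-th smallest element of $\rho$, $\mathrm{sign}(\rho,\tau)=(-1)^{i-1}$. A $d$-cochain is a formal $\mathbb F$-combination of $d$-simplices; the coboundary is $\delta\tau=\sum_{p\in[n]\setminus\tau}\mathrm{sign}(\tau\cup\{p\},\tau)(\tau\cup\{p\})$, extended linearly. A $d$-cocycle is a $d$-cochain $Z$ with $\delta Z=0$; a $d$-hypercut is a nonzero $d$-cocycle $H$ such that every $d$-cocycle supported in $\mathrm{Supp}(H)$ is a scalar multiple of $H$. The facet graph $G_d(K)$ has vertex set $K$, two $d$-simplices adjacent iff they share a $(d-1)$-face. A graph is $k$-connected if deleting any set of fewer than $k$ of its vertices leaves a nonempty connected graph. *)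

(* Defs.v *)
From HB Require Import structures.
From mathcomp Require Import all_boot all_order all_algebra.
Set Implicit Arguments. Unset Strict Implicit. Unset Printing Implicit Defensive.
Import GRing.Theory.
Local Open Scope ring_scope.

(* Vertices of K_n^d are 'I_n (i.e. [n] = {0,...,n-1}); a simplex is a finite
   set of vertices, oriented by increasing order. *)

Definition is_cochain (F : fieldType) (n d : nat) (f : {ffun {set 'I_n} -> F}) :=
  forall s : {set 'I_n}, #|s| != d.+1 -> f s = 0.

Definition Supp (F : fieldType) (n : nat) (f : {ffun {set 'I_n} -> F})
  : {set {set 'I_n}} := [set s | f s != 0].

(* sign(rho, rho \ {p}) = (-1)^(i-1), p the i-th smallest element of rho:
   i-1 is the number of elements of rho smaller than p. *)
Definition simplex_sign (F : fieldType) (n : nat) (rho : {set 'I_n}) (p : 'I_n) : F :=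
  (-1) ^+ #|[set q in rho | (q < p)%N]|.

(* coefficient of the (d+1)-simplex rho in delta f, where
   delta tau = sum_{p notin tau} sign(tau u {p}, tau) (tau u {p}). *)
Definition coboundary_at (F : fieldType) (n : nat) (f : {ffun {set 'I_n} -> F})
  (rho : {set 'I_n}) : F :=
  \sum_(p in rho) simplex_sign F rho p * f (rho :\ p).

Definition is_cocycle (F : fieldType) (n d : nat) (f : {ffun {set 'I_n} -> F}) :=
  is_cochain d f /\
  forall rho : {set 'I_n}, #|rho| = d.+2 -> coboundary_at f rho = 0.

Definition is_hypercut (F : fieldType) (n d : nat) (H : {ffun {set 'I_n} -> F}) :=
  is_cocycle d H /\ (exists s, H s != 0) /\
  forall Z : {ffun {set 'I_n} -> F}, is_cocycle d Z ->
    Supp Z \subset Supp H -> exists c : F, forall s, Z s = c * H s.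

Definition facet_adj (n d : nat) (s t : {set 'I_n}) : bool :=
  (s != t) && [exists f : {set 'I_n}, [&& #|f| == d, f \subset s & f \subset t]].

Definition induced_rel (T : finType) (e : rel T) (V : {set T}) : rel T :=
  [rel x y | [&& x \in V, y \in V & e x y]].

Definition connected_graph (T : finType) (e : rel T) (V : {set T}) : Prop :=
  V != set0 /\ forall x y, x \in V -> y \in V -> connect (induced_rel e V) x y.

Definition k_connected (T : finType) (e : rel T) (V : {set T}) (k : nat) : Prop :=
  forall S : {set T}, S \subset V -> (#|S| < k)%N -> connected_graph e (V :\: S).

(* Main.v *)
Require Import Defs.
From HB Require Import structures.
From mathcomp Require Import all_boot all_order all_algebra zify ring.
From Stdlib Require Import Classical_Prop.
Set Implicit Arguments. Unset Strict Implicit. Unset Printing Implicit Defensive.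
Import GRing.Theory.

Definition crossK n (K : {set {set 'I_n}}) (rho X : {set 'I_n}) :=
  [set s in K | (rho \subset s) && (#|s :&: X| == 1)].

Definition LH n (B V : {set 'I_n}) (d r : nat) (K : {set {set 'I_n}}) :=
  forall rho X : {set 'I_n}, B \subset rho -> rho \subset B :|: V ->
    #|rho| + 1 = #|B| + d -> X \subset V :\: rho -> X != set0 -> X != V :\: rho ->
    r <= #|crossK K rho X|.

Definition WF n (B V : {set 'I_n}) (d : nat) (K : {set {set 'I_n}}) :=
  [disjoint B & V] /\ forall s, s \in K ->
     [/\ B \subset s, s \subset B :|: V & #|s| = #|B| + d.+1].

Lemma card_disjU n (A B : {set 'I_n}) : [disjoint A & B] -> #|A :|: B| = #|A| + #|B|.
Proof. by move=> dAB; rewrite cardsU (disjoint_setI0 dAB) cards0 subn0. Qed.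

Lemma link_ok n (B V : {set 'I_n}) d r K u : u \in V ->
  WF B V d.+1 K -> d + 3 <= #|V| -> LH B V d.+1 r K ->
  [/\ WF (u |: B) (V :\ u) d [set s in K | u \in s], d + 2 <= #|V :\ u|
    & LH (u |: B) (V :\ u) d r [set s in K | u \in s]].
Proof.
move=> uV [dBV hK] hV hL.
have uB : u \notin B by rewrite (disjointFl dBV uV).
have cB : #|u |: B| = #|B|.+1 by rewrite cardsU1 uB.
have eU : (u |: B) :|: (V :\ u) = B :|: V.
  apply/setP=> x; rewrite !inE; case: (eqVneq x u) => [->|//]; by rewrite uV orbT.
split.
- split.
  + rewrite disjoints_subset; apply/subsetP=> x; rewrite !inE.
    case/orP=> [/eqP->|xB]; first by rewrite eqxx.
    by rewrite (disjointFr dBV xB) andbF.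
  + move=> s; rewrite inE => /andP[sK us]; have [h1 h2 h3] := hK s sK.
    by split; [rewrite subUset sub1set us | rewrite eU | rewrite cB addSnnS].
- by rewrite (cardsD1 u V) uV in hV; lia.
- move=> rho X h1 h2 h3 h4 h5 h6.
  have urho : u \in rho by apply: (subsetP h1); rewrite setU11.
  have eV : (V :\ u) :\: rho = V :\: rho.
    apply/setP=> x; rewrite !inE; case: (eqVneq x u) => [->|]; by rewrite ?urho ?andbF.
  have -> : crossK [set s in K | u \in s] rho X = crossK K rho X.
    apply/setP=> s; rewrite !inE; apply/idP/idP; first by case/andP=> /andP[->].
    move=> /andP[sK /andP[rs ->]]; rewrite sK rs andbT /= andbT; exact: (subsetP rs).
  apply: hL => //.
  + by apply: subset_trans h1; apply: subsetUr.
  + by rewrite -eU.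
  + by rewrite cB in h3; lia.
  + by rewrite -eV.
  + by rewrite -eV.
Qed.

Lemma star_lemma n d : 1 <= d -> forall (B V : {set 'I_n}) r K, 1 <= r ->
  WF B V d K -> d + 2 <= #|V| -> LH B V d r K ->
  forall v, v \in V -> d + r - 1 <= #|[set s in K | v \in s]|.
Proof.
elim: d => [//|d IH] _ B V r K r1 hW hV hL v vV.
case: d IH hW hV hL => [|d] IH hW hV hL.
- have [dBV hK] := hW.
  have vB : v \notin B by rewrite (disjointFl dBV vV).
  have eVB : V :\: B = V.
    by apply/setP=> x; rewrite !inE; case xB: (x \in B); rewrite ?(disjointFr dBV xB).
  have -> : [set s in K | v \in s] = crossK K B [set v].
    apply/setP=> s; rewrite !inE; case sK: (s \in K) => //=.
    have [-> _ _] := hK s sK; rewrite /=.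
    case vs: (v \in s).
      by rewrite (setIidPr (_ : [set v] \subset s)) ?sub1set ?cards1.
    suff -> : s :&: [set v] = set0 by rewrite cards0.
    by apply/setP=> x; rewrite !inE; case: (eqVneq x v) => [->|]; rewrite ?vs ?andbF.
  rewrite add1n /= subn1 /=; apply: hL => //.
  + exact: subsetUl.
  + by rewrite eVB sub1set.
  + by apply/set0Pn; exists v; rewrite inE.
  + rewrite eVB; apply/negP=> /eqP E; move: hV; rewrite -E cards1; done.
- rewrite leqNgt; apply/negP=> hlt.
  have [dBV hK] := hW.
  have hlink : forall u, u \in V -> u != v ->
      [set s in K | v \in s] = [set s in [set s in K | u \in s] | v \in s].
    move=> u uV uv.
    have [W1 V1 L1] := link_ok uV hW ltac:(lia) hL.
    have := IH isT _ _ r _ r1 W1 V1 L1 v ltac:(rewrite !inE eq_sym uv vV //).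
    move=> h.
    have sub : [set s in [set s in K | u \in s] | v \in s] \subset [set s in K | v \in s].
      by apply/subsetP=> s; rewrite !inE => /andP[/andP[-> _] ->].
    apply/eqP; rewrite eq_sym eqEcard sub /=; apply: leq_trans h; set c := #|[set s in K | v \in s]| in hlt *; move: hlt r1; clear; lia.
  have [u0 [u0V u0v]] : exists u, u \in V /\ u != v.
    have : 1 < #|V| by lia.
    rewrite (cardsD1 v V) vV add1n ltnS card_gt0 => /set0Pn[u]; rewrite !inE => /andP[].
    by move=> ? ?; exists u.
  have : [set s in K | v \in s] != set0.
    rewrite (hlink u0 u0V u0v) -card_gt0.
    have [W1 V1 L1] := link_ok u0V hW ltac:(lia) hL.
    have := IH isT _ _ r _ r1 W1 V1 L1 v ltac:(rewrite !inE eq_sym u0v vV //); lia.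
  case/set0Pn=> s; rewrite inE => /andP[sK vs].
  have VS : V \subset s.
    apply/subsetP=> u uV; case: (eqVneq u v) => [->//|uv].
    have mem : s \in [set s in K | v \in s] by rewrite inE sK vs.
    by move: mem; rewrite (hlink u uV uv) !inE => /andP[/andP[]].
  have [BS _ cs] := hK s sK.
  have : #|B :|: V| <= #|s| by apply: subset_leq_card; rewrite subUset BS.
  rewrite card_disjU // cs; lia.
Qed.

Lemma connect_in (T : finType) (e : rel T) (A : {set T}) x y :
  x \in A -> connect (induced_rel e A) x y -> y \in A.
Proof.
move=> xA /connectP[p pth ->]; elim/last_ind: p pth => //= p z _.
by rewrite rcons_path last_rcons => /andP[_]; rewrite /= => /and3P[].
Qed.

Lemma adj_face n m (s t f : {set 'I_n}) :
  s != t -> f \subset s -> f \subset t -> #|f| = m -> facet_adj m s t.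
Proof.
move=> st fs ft cf; apply/andP; split => //; apply/existsP; exists f.
by rewrite cf eqxx fs ft.
Qed.

Lemma out_B n (B V s : {set 'I_n}) k :
  B \subset s -> s \subset B :|: V -> #|s| = #|B| + k.+1 ->
  exists x, [/\ x \in s, x \notin B & x \in V].
Proof.
move=> Bs sBV cs.
have : 0 < #|s :\: B| by rewrite cardsDS // cs; lia.
case/card_gt0P=> x; rewrite inE => /andP[xB xs]; exists x; split => //.
by move: (subsetP sBV x xs); rewrite inE (negbTE xB).
Qed.

Lemma main_conn n d : 1 <= d -> forall (B V : {set 'I_n}) r K m, 1 <= r ->
  m = #|B| + d -> WF B V d K -> d + 2 <= #|V| -> LH B V d r K ->
  forall S : {set {set 'I_n}}, S \subset K -> #|S| < d + r - 1 ->
  forall x y : {set 'I_n}, x \in K :\: S -> y \in K :\: S ->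
    connect (induced_rel (@facet_adj n m) (K :\: S)) x y.
Proof.
elim: d => [//|d IH] _ B V r K m r1 em hW hV hL S SK cS e f eKS fKS.
case: d IH hW hV hL cS em => [|d] IH hW hV hL cS em;
have [dBV hK] := hW;
set R := induced_rel (facet_adj m) (K :\: S);
case: (boolP (connect R e f)) => // nc; exfalso;
set C := [set t | connect R e t];
(have eC : e \in C by rewrite inE connect0);
(have inC : forall t, t \in C -> t \in K :\: S by
  move=> t; rewrite inE; apply: connect_in);
have fC : f \notin C by rewrite inE.
-
  set X := [set x in V | [exists t in C, x \in t]].
  have adjC : forall t s x, t \in C -> s \in K :\: S -> x \in t -> x \in s -> x \in V ->
      s \in C.
    move=> t s x tC sKS xt xs xV.
    case: (eqVneq t s) => [<-//|ts].
    have tKS := inC t tC.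
    have xB : x \notin B by rewrite (disjointFl dBV xV).
    have [Bt _ _] := hK t (subsetP (subsetDl K S) t tKS).
    rewrite inE; apply: (@connect_trans _ R t); first by rewrite inE in tC.
    apply: connect1; rewrite /R /induced_rel /= tKS sKS /=.
    have [Bs _ _] := hK s (subsetP (subsetDl K S) s sKS).
    apply: (adj_face (f := x |: B)) => //; rewrite ?subUset ?sub1set ?xt ?xs ?Bt ?Bs //.
    by rewrite cardsU1 xB em addn1.
  have eVB : V :\: B = V.
    by apply/setP=> x; rewrite !inE; case xB: (x \in B); rewrite ?(disjointFr dBV xB).
  have XV : X \subset V :\: B.
    by rewrite eVB; apply/subsetP=> x; rewrite inE => /andP[].
  have Xn0 : X != set0.
    have eK := subsetP (subsetDl K S) e eKS.
    have [Be sBe ce] := hK e eK.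
    have [x [xe xB xV]] := out_B Be sBe ce.
    by apply/set0Pn; exists x; rewrite inE xV; apply/existsP; exists e; rewrite eC xe.
  have XnV : X != V :\: B.
    have fK := subsetP (subsetDl K S) f fKS.
    have [Bf sBf cf] := hK f fK.
    have [y [yf yB yV]] := out_B Bf sBf cf.
    apply/negP=> /eqP XE.
    have : y \in X by rewrite XE inE yB yV.
    rewrite inE => /andP[_ /existsP[t /andP[tC yt]]].
    by move: fC; rewrite (adjC t f y tC fKS yt yf yV).
  have cr : crossK K B X \subset S.
    apply/subsetP=> s; rewrite inE => /andP[sK /andP[Bs /cards1P[x sX]]].
    apply/negPn/negP=> sS.
    have sKS : s \in K :\: S by rewrite inE sS sK.
    have : x \in s :&: X by rewrite sX set11.
    rewrite inE => /andP[xs]; rewrite inE => /andP[xV /existsP[t /andP[tC xt]]].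
    have sC := adjC t s x tC sKS xt xs xV.
    have [_ sBV cs] := hK s sK.
    have : s :\: B \subset s :&: X.
      apply/subsetP=> z; rewrite !inE => /andP[zB zs]; rewrite zs /=.
      have zV : z \in V by move: (subsetP sBV z zs); rewrite inE (negbTE zB).
      by rewrite zV; apply/existsP; exists s; rewrite sC zs.
    by move/subset_leq_card; rewrite sX cards1 cardsDS // cs addKn.
  have := hL B X (subxx B) (subsetUl B V) ltac:(by rewrite addn1) XV Xn0 XnV.
  move: (subset_leq_card cr) cS; set c1 := #|crossK K B X|; set c2 := #|S|; move=> h1 h2 h3; clear -h1 h2 h3; lia.
- pose good u := #|[set s in S | u \in s]| < d.+1 + r - 1.
  have claimA : forall u t s, u \in V -> good u -> t \in C -> u \in t ->
      s \in K :\: S -> u \in s -> s \in C.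
    move=> u t s uV gu tC ut sKS us.
    have [W1 V1 L1] := link_ok uV hW ltac:(clear -hV; lia) hL.
    have uB : u \notin B by rewrite (disjointFl dBV uV).
    have Ssub : [set s in S | u \in s] \subset [set s in K | u \in s].
      by apply/subsetP=> x; rewrite !inE => /andP[xS ->]; rewrite (subsetP SK x xS).
    have em' : m = #|u |: B| + d.+1 by rewrite cardsU1 uB em addSnnS.
    have tKS := inC t tC.
    have hcon := IH isT _ _ r _ m r1 em' W1 V1 L1 _ Ssub gu t s.
    have : connect (induced_rel (facet_adj m)
       ([set s in K | u \in s] :\: [set s in S | u \in s])) t s.
      apply: hcon.
      + by move: tKS; rewrite !inE ut !andbT.
      + by move: sKS; rewrite !inE us !andbT.
    have sub : subrel (induced_rel (facet_adj m)
       ([set s in K | u \in s] :\: [set s in S | u \in s])) (connect R).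
      move=> x y /and3P[hx hy hxy]; apply: connect1.
      rewrite /R /induced_rel /= hxy andbT.
      by move: hx hy; rewrite !inE => /and3P[hx1 -> ux] /and3P[hy1 -> uy]; rewrite ux andbT in hx1; rewrite uy andbT in hy1; rewrite hx1 hy1.
    move/(connect_sub sub) => cts.
    rewrite inE; apply: (@connect_trans _ R t) => //; by rewrite inE in tC.
  have goodv : forall s, s \in K :\: S -> exists u, [/\ u \in s, u \in V & good u].
    move=> s sKS.
    case: (boolP [exists u, [&& u \in s, u \in V & good u]]).
      by move/existsP=> [u /and3P[? ? ?]]; exists u.
    move=> H; exfalso.
    have sK := subsetP (subsetDl K S) s sKS.
    have [Bs sBV cs] := hK s sK.
    case: (set_0Vmem S) => [S0|[tau tS]].
    + have [x [xs xB xV]] := out_B Bs sBV cs.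
      move/existsPn: H => /(_ x); rewrite xs xV /= /good.
      have : #|[set s in S | x \in s]| <= #|S| by apply: subset_leq_card; apply/subsetP=> z; rewrite inE => /andP[].
      rewrite S0 cards0 leqn0 => /eqP ->; clear -r1; lia.
    + have tK := subsetP SK tau tS; have [Bt _ ct] := hK tau tK.
      have st : s \subset tau.
        apply/subsetP=> x xs; case xB: (x \in B); first exact: (subsetP Bt x xB).
        have xV : x \in V by move: (subsetP sBV x xs); rewrite inE xB.
        move/existsPn: H => /(_ x); rewrite xs xV /= /good => bad.
        have sx : [set s in S | x \in s] \subset S by apply/subsetP=> z; rewrite inE => /andP[].
        have : [set s in S | x \in s] == S.
          rewrite eqEcard sx /=; move: bad cS; set c1 := #|[set s in S | x \in s]|; set c2 := #|S|.
          move=> h1 h2; clear -h1 h2; lia.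
        by move/eqP=> E; move: tS; rewrite -E inE => /andP[].
      have : s == tau by rewrite eqEcard st ct cs leqnn.
      by move/eqP=> E; move: sKS; rewrite E inE tS.
  have [u0 [u0e u0V gu0]] := goodv e eKS.
  have [v0 [v0f v0V gv0]] := goodv f fKS.
  have uv : u0 != v0.
    by apply/eqP=> E; move: fC; rewrite (claimA u0 e f u0V gu0 eC u0e fKS) // E.
  have [W1 V1 L1] := link_ok u0V hW ltac:(clear -hV; lia) hL.
  have := @star_lemma n d.+1 isT _ _ r _ r1 W1 V1 L1 v0 ltac:(by rewrite !inE eq_sym uv v0V).
  have sub : [set s in [set s in K | u0 \in s] | v0 \in s] \subset [set s in S | u0 \in s].
    apply/subsetP=> s; rewrite !inE => /andP[/andP[sK us] vs]; rewrite us andbT.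
    apply/negPn/negP=> sS.
    have sKS : s \in K :\: S by rewrite inE sS sK.
    have sC := claimA u0 e s u0V gu0 eC u0e sKS us.
    by move: fC; rewrite (claimA v0 s f v0V gv0 sC vs fKS v0f).
  move: (subset_leq_card sub) gu0; rewrite /good.
  set c1 := #|[set s in [set s in K | u0 \in s] | v0 \in s]|.
  set c2 := #|[set s in S | u0 \in s]|.
  move=> h1 h2 h3; clear -h1 h2 h3; lia.
Qed.

Local Open Scope ring_scope.

Lemma sign_swap (F : fieldType) n (tau : {set 'I_n}) (p q : 'I_n) :
  p \in tau -> q \in tau -> (q < p)%N ->
  simplex_sign F tau p * simplex_sign F (tau :\ p) q =
  - (simplex_sign F tau q * simplex_sign F (tau :\ q) p).
Proof.
move=> pt qt qp; rewrite /simplex_sign.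
have E1 : [set t in tau :\ p | (t < q)%N] = [set t in tau | (t < q)%N].
  apply/setP=> t; rewrite !inE; case: (eqVneq t p) => [->|_] /=; last by [].
  by rewrite ltnNge (ltnW qp) andbF.
have E2 : [set t in tau | (t < p)%N] = q |: [set t in tau :\ q | (t < p)%N].
  apply/setP=> t; rewrite !inE; case: (eqVneq t q) => [->|_] /=; last by [].
  by rewrite qt qp.
have qn : q \notin [set t in tau :\ q | (t < p)%N] by rewrite !inE eqxx.
rewrite E1 E2 cardsU1 qn add1n exprS; ring.
Qed.

Lemma pair_sum (F : fieldType) n (tau : {set 'I_n}) (G : 'I_n -> 'I_n -> F) :
  \sum_(p in tau) \sum_(q in tau :\ p) G p q =
  \sum_(p in tau) \sum_(q in tau | (q < p)%N) (G p q + G q p).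
Proof.
have -> : \sum_(p in tau) \sum_(q in tau :\ p) G p q =
   \sum_(p in tau) \sum_(q in tau | (q < p)%N) G p q +
   \sum_(p in tau) \sum_(q in tau | (p < q)%N) G p q.
  rewrite -big_split /=; apply: eq_bigr => p pt.
  rewrite (bigID (fun q : 'I_n => (q < p)%N)) /=; congr (_ + _); apply: eq_bigl => q.
    rewrite !inE; case: (ltngtP q p) => // h; rewrite ?andbT ?andbF //.
    by rewrite -val_eqE /= (ltn_eqF h).
  rewrite !inE -val_eqE /=; case: (ltngtP q p) => h; rewrite /= ?andbF ?andbT //.
rewrite [X in _ + X](exchange_big_dep (fun q => q \in tau)) /=; last by move=> ? ? ? /andP[].
rewrite -big_split /=; apply: eq_bigr => p pt; rewrite big_split /=; congr (_ + _).
by apply: eq_bigl => q; rewrite pt.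
Qed.

Lemma setD1C n (s : {set 'I_n}) p q : s :\ p :\ q = s :\ q :\ p.
Proof. by apply/setP=> x; rewrite !inE; case: (x == p); case: (x == q). Qed.

Lemma dd0 (F : fieldType) n (g : {ffun {set 'I_n} -> F}) (tau : {set 'I_n}) :
  \sum_(p in tau) simplex_sign F tau p * coboundary_at g (tau :\ p) = 0.
Proof.
rewrite /coboundary_at.
under eq_bigr => p _ do rewrite mulr_sumr.
rewrite pair_sum; apply: big1 => p pt; apply: big1 => q /andP[qt qp].
rewrite setD1C !mulrA sign_swap //; ring.
Qed.

Definition mkZ (F : fieldType) n (d : nat) (g : {ffun {set 'I_n} -> F}) : {ffun {set 'I_n} -> F} :=
  [ffun s : {set 'I_n} => if #|s| == d.+1 then coboundary_at g s else 0].

Lemma mkZ_cocycle (F : fieldType) n (d : nat) (g : {ffun {set 'I_n} -> F}) :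
  is_cocycle d (mkZ d g).
Proof.
split.
  by move=> s hs; rewrite ffunE (negbTE hs).
move=> rho hr; rewrite /coboundary_at.
rewrite -[RHS](dd0 g rho); apply: eq_bigr => p pr; rewrite ffunE.
have -> : #|rho :\ p| = d.+1 by move: hr; rewrite (cardsD1 p rho) pr add1n => -[].
by rewrite eqxx.
Qed.

Lemma cocycle_lin (F : fieldType) n (d : nat) (Z1 Z2 : {ffun {set 'I_n} -> F}) (c : F) :
  is_cocycle d Z1 -> is_cocycle d Z2 -> is_cocycle d [ffun s : {set 'I_n} => Z1 s - c * Z2 s].
Proof.
move=> [h1 h1'] [h2 h2']; split.
  by move=> s hs; rewrite ffunE h1 // h2 // mulr0 subr0.
move=> rho hr; have := h1' rho hr; have := h2' rho hr; rewrite /coboundary_at => e2 e1.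
have -> : \sum_(p in rho) simplex_sign F rho p * [ffun s : {set 'I_n} => Z1 s - c * Z2 s] (rho :\ p)
  = \sum_(p in rho) simplex_sign F rho p * Z1 (rho :\ p) -
    c * \sum_(p in rho) simplex_sign F rho p * Z2 (rho :\ p).
  rewrite mulr_sumr -sumrB; apply: eq_bigr => p _; rewrite ffunE; ring.
by rewrite e1 e2 mulr0 subr0.
Qed.

Lemma extract (F : fieldType) n (d : nat) : forall m (Z : {ffun {set 'I_n} -> F}),
  (#|Supp Z| < m)%N -> is_cocycle d Z -> (exists s, Z s != 0) ->
  exists H : {ffun {set 'I_n} -> F}, is_hypercut d H /\ Supp H \subset Supp Z.
Proof.
elim=> [//|m IH] Z hm cZ [s0 hs0].
case: (classic (exists Z' : {ffun {set 'I_n} -> F}, [/\ is_cocycle d Z',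
   Supp Z' \subset Supp Z & ~ exists c : F, forall s, Z' s = c * Z s])).
- move=> [Z' [cZ' sZ' nc]].
  pose c := Z' s0 / Z s0.
  pose W := [ffun s : {set 'I_n} => Z' s - c * Z s].
  have cW : is_cocycle d W by apply: cocycle_lin.
  have sW : Supp W \subset Supp Z :\ s0.
    apply/subsetP=> s; rewrite !inE ffunE.
    case: (eqVneq s s0) => [->|ss0].
      by rewrite /c divfK // subrr eqxx.
    apply: contraNN => /eqP Zs.
    have : Z' s == 0.
      apply/negPn/negP=> h; have := subsetP sZ' s; rewrite !inE => /(_ h).
      by rewrite Zs eqxx.
    by move/eqP->; rewrite Zs mulr0 subr0.
  have nW : exists s, W s != 0.
    apply: NNPP => hn; apply: nc; exists c => s.
    have : W s = 0 by apply/eqP; apply: negbNE; apply/negP => h; apply: hn; exists s.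
    by rewrite ffunE => /eqP; rewrite subr_eq0 => /eqP.
  have hW : (#|Supp W| < m)%N.
    have h1 := subset_leq_card sW.
    have h2 : #|Supp Z| = (#|Supp Z :\ s0|).+1 by rewrite (cardsD1 s0 (Supp Z)) inE hs0.
    move: h1 h2 hm; set a := #|Supp W|; set b := #|Supp Z :\ s0|; set z := #|Supp Z|.
    move=> h1 h2 h3; clear -h1 h2 h3; lia.
  have [H [hH sH]] := IH W hW cW nW.
  exists H; split => //; apply: subset_trans sH _; apply: subset_trans sW _.
  exact: subsetDl.
- move=> nE; exists Z; split => //; split => //; split; first by exists s0.
  move=> Z' cZ' sZ'; apply: NNPP => hc; apply: nE; by exists Z'.
Qed.

Definition gX (F : fieldType) n (rho X : {set 'I_n}) : {ffun {set 'I_n} -> F} :=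
  [ffun f : {set 'I_n} => \sum_(x in f)
     ((x \in X)%:R * simplex_sign F f x * (f :\ x == rho)%:R)].

Definition termZ (F : fieldType) n (rho X s : {set 'I_n}) (p q : 'I_n) : F :=
  simplex_sign F s p * simplex_sign F (s :\ p) q * (s :\ p :\ q == rho)%:R *
  ((q \in X)%:R - (p \in X)%:R).

Lemma Z_expand (F : fieldType) n (rho X s : {set 'I_n}) :
  coboundary_at (gX F rho X) s =
  \sum_(p in s) \sum_(q in s | (q < p)%N) termZ F rho X s p q.
Proof.
rewrite /coboundary_at.
under eq_bigr => p _ do rewrite ffunE mulr_sumr.
rewrite pair_sum; apply: eq_bigr => p ps; apply: eq_bigr => q /andP[qs qp].
have E := sign_swap F ps qs qp.
rewrite /termZ (setD1C s q p).
set A := simplex_sign F s p; set B := simplex_sign F (s :\ p) q.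
set C2 := simplex_sign F s q; set D := simplex_sign F (s :\ q) p.
have E' : C2 * D = - (A * B) by rewrite E opprK.
have -> : C2 * ((p \in X)%:R * D * (s :\ p :\ q == rho)%:R) =
   (C2 * D) * ((p \in X)%:R * (s :\ p :\ q == rho)%:R) by ring.
rewrite E'; ring.
Qed.

Lemma sum_nz_ex (F : fieldType) n (s : {set 'I_n}) (T : 'I_n -> 'I_n -> F) :
  \sum_(p in s) \sum_(q in s | (q < p)%N) T p q != 0 ->
  exists p q, [/\ p \in s, q \in s, (q < p)%N & T p q != 0].
Proof.
move=> h; apply: NNPP => hn; move/eqP: h; apply.
apply: big1 => p ps; apply: big1 => q /andP[qs qp].
by apply/eqP; apply: negbNE; apply/negP => hT; apply: hn; exists p, q.
Qed.

Lemma Z_supp (F : fieldType) n (d : nat) (rho X s : {set 'I_n}) :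
  [disjoint X & rho] -> mkZ d (gX F rho X) s != 0 ->
  [/\ #|s| = d.+1, rho \subset s & #|s :&: X| = 1%N].
Proof.
move=> dXr; rewrite ffunE; case: (#|s| =P d.+1) => [hs|_] /=; last by rewrite eqxx.
rewrite Z_expand => /sum_nz_ex [p [q [ps qs qp hT]]].
have hr : s :\ p :\ q == rho.
  by apply/negPn/negP => /negbTE h; move: hT; rewrite /termZ h mulr0 mul0r eqxx.
have hX : (q \in X) != (p \in X).
  by apply/negP => /eqP h; move: hT; rewrite /termZ h subrr mulr0 eqxx.
move/eqP: hr => hr.
have rs : rho \subset s by rewrite -hr; apply: subset_trans (subsetDl _ _) (subsetDl _ _).
split => //.
have inrho : forall x, x \in s -> x != p -> x != q -> x \in rho.
  by move=> x xs xp xq; rewrite -hr !inE xp xq xs.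
apply/eqP/cards1P.
case qX : (q \in X); move: hX; rewrite qX.
- move=> hX'; have pX : (p \in X) = false by move: hX'; case: (p \in X).
  exists q; apply/setP => x; rewrite !inE.
  case: (eqVneq x q) => [->|xq]; first by rewrite qs qX.
  apply/negP => /andP[xs xX]; case: (eqVneq x p) => [xp|xp]; first by rewrite xp pX in xX.
  by have := inrho x xs xp xq; rewrite (disjointFr dXr xX).
- move=> hX'; have pX : (p \in X) = true by move: hX'; case: (p \in X).
  exists p; apply/setP => x; rewrite !inE.
  case: (eqVneq x p) => [->|xp]; first by rewrite ps pX.
  apply/negP => /andP[xs xX]; case: (eqVneq x q) => [xq|xq]; first by rewrite xq qX in xX.
  by have := inrho x xs xp xq; rewrite (disjointFr dXr xX).
Qed.

Lemma sign_nz (F : fieldType) n (s : {set 'I_n}) p : simplex_sign F s p != 0.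
Proof. by rewrite /simplex_sign expf_neq0 // oppr_eq0 oner_eq0. Qed.

Lemma Z_nonzero (F : fieldType) n (d : nat) (rho X : {set 'I_n}) (a b : 'I_n) :
  (b < a)%N -> a \notin rho -> b \notin rho -> (a \in X) != (b \in X) ->
  (#|rho| + 2 = d.+1)%N ->
  mkZ d (gX F rho X) (a |: (b |: rho)) != 0.
Proof.
move=> ba ar br hX cr.
set s0 := a |: (b |: rho).
have ab : a != b by apply/eqP => E; rewrite E ltnn in ba.
have cs : #|s0| = d.+1.
  rewrite /s0 cardsU1 cardsU1 !inE (negbTE ab) (negbTE ar) br /=; move: cr; set k := #|rho|; clear; lia.
rewrite ffunE cs eqxx Z_expand.
have as0 : a \in s0 by rewrite !inE eqxx.
have bs0 : b \in s0 by rewrite !inE eqxx orbT.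
have hr : s0 :\ a :\ b = rho.
  apply/setP=> x; rewrite !inE; case: (eqVneq x a) => [->|xa] /=.
    by rewrite andbF (negbTE ar).
  by case: (eqVneq x b) => [->|xb] //=; rewrite (negbTE br).
have uniq : forall p q, p \in s0 -> q \in s0 -> (q < p)%N ->
    termZ F rho X s0 p q != 0 -> p = a /\ q = b.
  move=> p q ps qs qp hT.
  have hr' : s0 :\ p :\ q == rho.
    by apply/negPn/negP => /negbTE h; move: hT; rewrite /termZ h mulr0 mul0r eqxx.
  move/eqP: hr' => hr'.
  have pnr : p \notin rho.
    apply/negP => pr; have : p \in s0 :\ p :\ q by rewrite hr'.
    by rewrite !inE eqxx /= ?andbF.
  have qnr : q \notin rho.
    apply/negP => pr; have : q \in s0 :\ p :\ q by rewrite hr'.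
    by rewrite !inE eqxx /= ?andbF.
  have pab : p = a \/ p = b.
    by move: ps; rewrite !inE (negbTE pnr) orbF => /orP[/eqP|/eqP]; auto.
  have qab : q = a \/ q = b.
    by move: qs; rewrite !inE (negbTE qnr) orbF => /orP[/eqP|/eqP]; auto.
  case: pab => Ep; case: qab => Eq; rewrite Ep Eq in qp *; split => //.
  - by rewrite ltnn in qp.
  - by move: (ltn_trans ba qp); rewrite ltnn.
  - by move: (ltn_trans ba qp); rewrite ltnn.
  - by rewrite ltnn in qp.
rewrite (bigD1 a) //= (bigD1 b) /=; last by rewrite bs0 ba.
rewrite big1; last first.
  move=> q /andP[/andP[qs qa] qb]; apply/eqP; apply: negbNE; apply/negP => hT.
  by have [_ E] := uniq a q as0 qs qa hT; rewrite E eqxx in qb.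
rewrite addr0 big1; last first.
  move=> p /andP[ps pa]; apply: big1 => q /andP[qs qp]; apply/eqP; apply: negbNE; apply/negP => hT.
  by have [E _] := uniq p q ps qs qp hT; rewrite E eqxx in pa.
rewrite addr0 /termZ hr eqxx mulr1 mulf_neq0 ?mulf_neq0 ?sign_nz //.
by move: hX; case: (a \in X); case: (b \in X) => //= _; rewrite ?sub0r ?subr0 ?oppr_eq0 oner_eq0.
Qed.

Lemma LH_of_hyp (F : fieldType) n (d r : nat) (K : {set {set 'I_n}}) :
  (1 <= d)%N ->
  (forall H : {ffun {set 'I_n} -> F}, is_hypercut d H ->
     (r <= #|Supp H :&: K|)%N) ->
  LH set0 setT d r K.
Proof.
move=> d1 hH rho X _ _ cr XsD Xn0 XnD.
rewrite cards0 add0n in cr.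
have dXr : [disjoint X & rho].
  rewrite disjoints_subset; apply: subset_trans XsD _.
  by apply/subsetP=> x; rewrite !inE => /andP[].
have [x0 x0X] := set0Pn _ Xn0.
have [y0 y0D y0X] : exists2 y, y \in setT :\: rho & y \notin X.
  apply/subsetPn; apply/negP => h; apply/negP: XnD; apply/negPn.
  by rewrite eqEsubset XsD h.
have x0r : x0 \notin rho by rewrite (disjointFr dXr x0X).
have y0r : y0 \notin rho by move: y0D; rewrite !inE andbT.
pose Z := mkZ d (gX F rho X).
have cZ : is_cocycle d Z by apply: mkZ_cocycle.
have crr : (#|rho| + 2 = d.+1)%N by rewrite -cr addn2 addn1.
have nZ : exists s, Z s != 0.
  case: (ltngtP x0 y0) => h.
  - exists (y0 |: (x0 |: rho)); apply: Z_nonzero => //.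
    by rewrite x0X (negbTE y0X).
  - exists (x0 |: (y0 |: rho)); apply: Z_nonzero => //.
    by rewrite x0X (negbTE y0X).
  - have E : x0 = y0 by apply: val_inj.
    by move: y0X; rewrite -E x0X.
have [H [hHc sH]] := extract (m := #|Supp Z|.+1) (leqnn _) cZ nZ.
have h1 := hH H hHc.
have h2 : (#|Supp H :&: K| <= #|Supp Z :&: K|)%N.
  by apply: subset_leq_card; apply: setSI.
have h3 : (#|Supp Z :&: K| <= #|crossK K rho X|)%N.
  apply: subset_leq_card; apply/subsetP => s; rewrite !inE => /andP[sZ sK].
  have [_ rs cX] := Z_supp dXr sZ.
  by rewrite sK rs cX.
exact: leq_trans h1 (leq_trans h2 h3).
Qed.

Theorem corollary4p5 (F : fieldType) (n d r : nat)
  (K : {set {set 'I_n}}) :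
  (1 <= d)%N -> (1 <= r)%N -> (d + 2 <= n)%N ->
  (forall s, s \in K -> #|s| = d.+1) ->
  (forall H : {ffun {set 'I_n} -> F}, is_hypercut d H ->
     (r <= #|Supp H :&: K|)%N) ->
  k_connected (@facet_adj n d) K (d + r - 1).
Proof.
move=> d1 r1 dn hK hH S SK cS.
have hL := LH_of_hyp d1 hH.
have hW : WF set0 setT d K.
  split; first by rewrite disjoints_subset sub0set.
  by move=> s sK; split; [exact: sub0set | rewrite set0U subsetT | rewrite cards0 add0n hK].
have hV : (d + 2 <= #|[set: 'I_n]|)%N by rewrite cardsT card_ord.
split.
- have n0 : (0 < n)%N by apply: leq_trans dn; rewrite addn2.
  have := star_lemma d1 r1 hW hV hL (v := Ordinal n0) (in_setT _).
  move=> hs; apply/negP => /eqP E.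
  have : ([set s in K | Ordinal n0 \in s] \subset S).
    apply/subsetP=> s; rewrite inE => /andP[sK _]; apply/negPn/negP => sS.
    have : s \in K :\: S by rewrite inE sS sK.
    by rewrite E inE.
  move/subset_leq_card; move: hs cS.
  set a := #|[set s in K | Ordinal n0 \in s]|; set b := #|S|.
  move=> h1 h2 h3; clear -h1 h2 h3; lia.
- move=> x y xKS yKS.
  apply: (main_conn d1 r1 (m := d) _ hW hV hL SK cS xKS yKS).
  by rewrite cards0.
Qed.
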